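(* Let $h>1$, $q=2^h$, and let $U$ be a nonempty subset of $\mathrm{GF}(q)^{\star}$. Then every non-degenerate conic of $PG(2,q^2)$ has at least one point in the set $\Psi'=\{P(x,y):\|x\|\in U\}\cup\{Y_\infty\}$, where $Y_\infty$ is the point at infinity of the vertical lines $X=c$; equivalently, the set of lines $\{X=c: c\in\mathrm{GF}(q^2),\ \|c\|\in U\}$ of $PG(2,q^2)$ is a conic blocking set.
   Context: $\|x\|=x^{q+1}$ for $x\in\mathrm{GF}(q^2)$. A conic blocking set of $PG(2,q^2)$ is a set of lines such that every non-degenerate conic meets at least one line of the set. *)

(* Defs.v *)
From HB Require Import structures.
From mathcomp Require Import all_boot all_order all_algebra all_field.
Set Implicit Arguments. Unset Strict Implicit. Unset Printing Implicit Defensive.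
Import GRing.Theory.
Local Open Scope ring_scope.

Definition conicQ (F : nzRingType) (a0 a1 a2 b0 b1 b2 : F) (x y z : F) : F :=
  a0 * x ^+ 2 + a1 * y ^+ 2 + a2 * z ^+ 2 + b0 * y * z + b1 * x * z + b2 * x * y.

Definition conicPolar (F : nzRingType) (a0 a1 a2 b0 b1 b2 : F)
  (x y z u v w : F) : F :=
  conicQ a0 a1 a2 b0 b1 b2 (x + u) (y + v) (z + w)
  - conicQ a0 a1 a2 b0 b1 b2 x y z - conicQ a0 a1 a2 b0 b1 b2 u v w.

(* The conic Q = 0 is non-degenerate (non-singular): it has no singular
   point, i.e. no nonzero vector v with Q(v) = 0 and B(v, .) = 0
   (equivalently, all partial derivatives of Q vanish at v). *)
Definition nondeg_conic (F : nzRingType) (a0 a1 a2 b0 b1 b2 : F) : Prop :=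
  forall x y z : F, (x, y, z) != (0, 0, 0) ->
    conicQ a0 a1 a2 b0 b1 b2 x y z = 0 ->
    exists u v w : F, conicPolar a0 a1 a2 b0 b1 b2 x y z u v w != 0.

(* Main.v *)
Require Import Defs.
From HB Require Import structures.
From mathcomp Require Import all_boot all_order all_algebra all_field.
From Stdlib Require Import Ring Field Lia Classical.
Set Implicit Arguments. Unset Strict Implicit.
Import GRing.Theory.
Local Open Scope ring_scope.

Section Alg.
Variable F : fieldType.
Definition fadd (x y : F) : F := x + y.
Definition fmul (x y : F) : F := x * y.
Definition fopp (x : F) : F := - x.
Definition fsub (x y : F) : F := x - y.
Definition finv (x : F) : F := x^-1.
Definition fdiv (x y : F) : F := x / y.
Definition fzero : F := 0.
Definition fone : F := 1.
Lemma Fring_th : @ring_theory F fzero fone fadd fmul fsub fopp (@eq F).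
Proof. rewrite /fadd/fmul/fsub/fopp/fone/fzero. split=> //=; [exact: add0r|exact: addrC|exact: addrA|exact: mul1r|exact: mulrC|exact: mulrA|exact: mulrDl|exact: subrr]. Qed.
Lemma Ffield_th : @field_theory F fzero fone fadd fmul fsub fopp fdiv finv (@eq F).
Proof. split=> //=; [exact: Fring_th| apply/eqP; exact: oner_neq0 | move=> p Hp; rewrite /fmul/finv/fone mulVf //; exact/eqP]. Qed.
Add Field Ffield : Ffield_th.

Ltac canon t := lazymatch t with
 | @Algebra.add _ ?a ?b => let a' := canon a in let b' := canon b in constr:(fadd a' b')
 | @GRing.mul _ ?a ?b => let a' := canon a in let b' := canon b in constr:(fmul a' b')
 | @Algebra.opp _ ?a => let a' := canon a in constr:(fopp a')
 | @GRing.inv _ ?a => let a' := canon a in constr:(finv a')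
 | @Algebra.zero _ => constr:(fzero)
 | @GRing.one _ => constr:(fone)
 | _ => t
end.
Ltac canon_goal := lazymatch goal with |- @eq _ ?a ?b =>
  let a' := canon a in let b' := canon b in change (@eq F a' b') end.
Ltac fring := rewrite ?expr2 ?exprS ?expr0; canon_goal; ring.
Ltac ffield := rewrite ?expr2 ?exprS ?expr0; canon_goal; field; repeat split; apply/eqP; assumption.

Lemma Q010 (a0 a1 a2 b0 b1 b2 : F) : conicQ a0 a1 a2 b0 b1 b2 0 1 0 = a1.
Proof. rewrite /conicQ; fring. Qed.

Lemma Qaff (a0 a1 a2 b0 b1 b2 x y : F) : conicQ a0 a1 a2 b0 b1 b2 x y 1 =
  (a0*x^+2 + b1*x + a2) + a1*y^+2 + (b0 + b2*x)*y.
Proof. rewrite /conicQ; fring. Qed.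

Lemma root_sol (a1 C D z : F) : a1 != 0 -> C != 0 -> z^+2 + z = a1*D/C^+2 ->
  a1*(z*C/a1)^+2 + C*(z*C/a1) = D.
Proof.
move=> Ha Hc Hz.
have ->: D = (z^+2 + z) * C^+2 / a1 by rewrite Hz; ffield.
ffield.
Qed.

Lemma polar_nucleus (a0 a1 a2 b0 b1 b2 u v w : F) :
  conicPolar a0 a1 a2 b0 b1 b2 b0 b1 b2 u v w =
  (1+1)*(a0*b0*u + a1*b1*v + a2*b2*w + b0*b1*w + b0*b2*v + b1*b2*u).
Proof. rewrite /conicPolar /conicQ; fring. Qed.

Lemma QN_b2 (a0 a1 a2 b0 b1 b2 : F) : b2 != 0 ->
  conicQ a0 a1 a2 b0 b1 b2 b0 b1 b2 =
  b2^+2 * (a0*(-b0/b2)^+2 + b1*(-b0/b2) + a2) + a1*b1^+2 + (1+1)*(1+1)*(b0*b1*b2).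
Proof. move=> Hb; rewrite /conicQ; ffield. Qed.

Lemma QN_b20 (a0 a1 a2 b0 b1 : F) :
  conicQ a0 a1 a2 b0 b1 0 b0 b1 0 = a0*b0^+2 + a1*b1^+2.
Proof. rewrite /conicQ; fring. Qed.

Lemma C_inv (b0 b2 s : F) : b2 != 0 -> s != 0 -> b0 + b2*(-b0/b2 + s^-1) = b2/s.
Proof. move=> *; ffield. Qed.

Lemma e_b2 (a0 a1 a2 b0 b1 b2 s : F) : b2 != 0 -> s != 0 ->
  a1*(a0*(-b0/b2 + s^-1)^+2 + b1*(-b0/b2 + s^-1) + a2)/(b2/s)^+2 =
  (a1/b2^+2)*((a0*(-b0/b2)^+2+b1*(-b0/b2)+a2)*s^+2 + b1*s + a0)
   + (1+1)*((a1/b2^+2)*a0*(-b0/b2)*s).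
Proof. move=> *; ffield. Qed.

Lemma e_b20 (a0 a1 a2 b0 b1 x : F) : b0 != 0 ->
  a1*(a0*x^+2 + b1*x + a2)/(b0 + 0*x)^+2 =
  (a1/b0^+2*a0)*x^+2 + (a1/b0^+2*b1)*x + a1/b0^+2*a2.
Proof. move=> *; ffield. Qed.

Lemma norm_id (x0 Xq u m v : F) : m = x0*Xq - u -> m != 0 -> v != 0 ->
  v - Xq/m != 0 -> (u/m^+2)/v - x0/m != 0 ->
  (Xq + ((u/m^+2)/v - x0/m)^-1)*(x0 + (v - Xq/m)^-1) = u.
Proof.
move=> Hm Hm0 Hv Hs HS.
set s := v - Xq/m in Hs *; set S := (u/m^+2)/v - x0/m in HS *.
have E: (Xq*S + 1)*(x0*s + 1) = u*(S*s).
  rewrite /S /s; move: Hm0; rewrite Hm => Hm0; ffield.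
have ->: (Xq + S^-1)*(x0 + s^-1) = (Xq*S + 1)*(x0*s + 1) / (S*s) by ffield.
rewrite E; ffield.
Qed.

Lemma eps_zero (a1 c d b : F) : a1 != 0 -> c != 0 -> a1/c^+2*d = (a1/c^+2*b)^+2 ->
  c^+2*d = a1*b^+2.
Proof.
move=> Ha Hc H.
have ->: c^+2*d = (c^+2)^+2/a1 * (a1/c^+2*d) by ffield.
rewrite H; ffield.
Qed.
Lemma AS_fact (y y0 : F) : (y^+2 + y) - (y0^+2 + y0) = (y - y0)*(y + y0 + 1).
Proof. fring. Qed.
End Alg.


Section Fin.
Variable F : finFieldType.
Variable h : nat.
Hypothesis hF : #|F| = ((2 ^ h) ^ 2)%N.
Hypothesis h1 : (0 < h)%N.

Lemma cardF2 : #|F| = (2 ^ (h + h))%N.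
Proof. by rewrite hF expnD expnS expn1. Qed.

Lemma two0 : 1 + 1 = 0 :> F.
Proof.
have Hc: (2%N \in [pchar F]) by apply: (@card_finPcharP _ _ (h + h)); rewrite ?cardF2.
by rewrite -(pcharf0 Hc) -mulr2n.
Qed.

Lemma addxx (x : F) : x + x = 0.
Proof. by rewrite -[x]mulr1 -mulrDr two0 mulr0. Qed.

Lemma oppc2 (x : F) : - x = x.
Proof. by apply/eqP; rewrite -subr_eq0 -opprD addxx oppr0. Qed.

Lemma frobD k (x y : F) : (x + y) ^+ (2 ^ k) = x ^+ (2 ^ k) + y ^+ (2 ^ k).
Proof.
elim: k => [|k IH]; first by rewrite !expr1.
by rewrite expnSr !exprM IH sqrrD mulr2n addxx addr0.
Qed.

Lemma expcard (x : F) : x ^+ (2 ^ (h + h)) = x.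
Proof. by rewrite -cardF2 expf_card. Qed.

Definition Tr (z : F) : F := \sum_(k < h + h) z ^+ (2 ^ k).

Lemma TrD x y : Tr (x + y) = Tr x + Tr y.
Proof. by rewrite /Tr -big_split /=; apply: eq_bigr => i _; rewrite frobD. Qed.

Lemma Tr0 : Tr 0 = 0.
Proof. by rewrite /Tr big1 // => i _; rewrite expr0n expn_eq0. Qed.

Lemma Trsq z : Tr (z ^+ 2) = Tr z.
Proof.
rewrite /Tr.
have E: forall k, (z ^+ 2) ^+ (2 ^ k) = z ^+ (2 ^ k.+1) by move=> k; rewrite -exprM expnS.
under eq_bigr do rewrite E.
apply: (@addIr _ (z ^+ (2 ^ 0))).
have R1 := big_ord_recl (h + h) (fun k : 'I_(h + h).+1 => z ^+ (2 ^ k)).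
have R2 := big_ord_recr (h + h) (fun k : 'I_(h + h).+1 => z ^+ (2 ^ k)).
rewrite /= in R1 R2.
rewrite addrC -R1 R2 expcard expn0 expr1 //.
Qed.

Lemma Trsq_self z : Tr z ^+ 2 = Tr z.
Proof.
rewrite -{2}Trsq /Tr.
rewrite (big_morph (fun x : F => x ^+ 2) (fun x y => frobD 1 x y) (expr0n _ 2)).
by apply: eq_bigr => i _; rewrite exprAC.
Qed.

Lemma Tr01 z : Tr z = 0 \/ Tr z = 1.
Proof.
have: Tr z * (Tr z - 1) = 0 by rewrite mulrBr mulr1 -expr2 Trsq_self subrr.
by move/eqP; rewrite mulf_eq0 subr_eq0 => /orP[/eqP|/eqP]; [left|right].
Qed.

Lemma Tr_AS y : Tr (y ^+ 2 + y) = 0.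
Proof. by rewrite TrD Trsq addxx. Qed.

End Fin.

Section Fin2.
Variable F : finFieldType.
Variable h : nat.
Hypothesis hF : #|F| = ((2 ^ h) ^ 2)%N.
Hypothesis h1 : (0 < h)%N.

Lemma card_part (f : F -> F) (A B : {set F}) : (forall x, x \in A -> f x \in B) ->
  #|A| = (\sum_(b in B) #|[set x in A | f x == b]|)%N.
Proof.
move=> HAB; rewrite -sum1_card (partition_big f (mem B)) //=.
by apply: eq_bigr => b _; rewrite sum1dep_card.
Qed.

Lemma AS_fiber (b : F) : leq #|[set x in [set: F] | x^+2 + x == b]| 2.
Proof.
set S := [set _ in _ | _].
have [HS|/set0Pn [y0 Hy0]] := eqVneq S set0; first by rewrite HS cards0.
apply: (@leq_trans #|[set y0; y0 + 1]|); last by rewrite cards2 ltnS leq_b1.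
apply: subset_leq_card; apply/subsetP => y; rewrite !inE => /eqP Hy.
move: Hy0; rewrite !inE => /eqP Hy0.
have: (y - y0) * (y + y0 + 1) = 0 by rewrite -AS_fact Hy Hy0 subrr.
move/eqP; rewrite mulf_eq0 => /orP[|]; rewrite ?subr_eq0 => /eqP E.
  by rewrite E eqxx.
apply/orP; right; apply/eqP.
have: y = - (y0 + 1) by apply/eqP; rewrite -addr_eq0 addrA E.
by rewrite (oppc2 hF).
Qed.

Definition TrP : {poly F} := \sum_(k < h + h) 'X^(2 ^ k).

Lemma TrP_horner z : TrP.[z] = Tr h z.
Proof. by rewrite /TrP horner_sum; apply: eq_bigr => i _; rewrite hornerXn. Qed.

Lemma TrP_size : (size TrP <= (2 ^ (h + h).-1).+1)%N.
Proof.
rewrite /TrP; apply: (big_ind (fun p : {poly F} => size p <= (2 ^ (h + h).-1).+1)%N) => [|p1 p2 H1 H2|i _].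
- by rewrite size_poly0.
- by apply: leq_trans (size_polyD _ _) _; rewrite geq_max H1 H2.
- rewrite size_polyXn ltnS leq_pexp2l //.
  by rewrite -ltnS prednK ?ltn_ord // addn_gt0 h1.
Qed.

Lemma TrP_neq0 : TrP != 0.
Proof.
have hh : (0 < h + h)%N by rewrite addn_gt0 h1.
apply/eqP => E; have := congr1 (fun p : {poly F} => p`_1) E.
rewrite coef0 /TrP coef_sum (bigD1 (Ordinal hh)) //= coefXn expn0 eqxx.
rewrite big1 ?addr0; first by move/eqP; rewrite oner_eq0.
move=> i Hi; rewrite coefXn.
have: (1 != 2 ^ i)%N.
  apply/eqP=> E1; move: Hi; rewrite -val_eqE /=.
  case: (nat_of_ord i) E1 => // n; rewrite expnS => E1.
  by have := congr1 odd E1; rewrite oddM.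
by move/negbTE=> ->.
Qed.

Lemma AS_solvable (z : F) : Tr h z = 0 -> exists y, y^+2 + y = z.
Proof.
move=> Hz.
set f := fun y : F => y ^+ 2 + y.
set I := f @: [set: F].
set K0 := [set z : F | Tr h z == 0].
have sub : I \subset K0.
  by apply/subsetP => w /imsetP [y _ ->]; rewrite inE /f Tr_AS.
have cK0 : (#|K0| < (2 ^ (h + h).-1).+1)%N.
  apply: leq_trans (TrP_size).
  rewrite cardE; apply: max_poly_roots; first exact: TrP_neq0.
    by apply/allP => w; rewrite mem_enum inE /root TrP_horner => /eqP ->.
  exact: enum_uniq.
have cI : (2 ^ (h + h) <= 2 * #|I|)%N.
  rewrite -(cardF2 hF) -cardsT (card_part (f := f) (B := I)); last by move=> x _; exact: imset_f.
  rewrite mulnC -sum_nat_const; apply: leq_sum => b _; exact: AS_fiber.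
have E : I = K0.
  apply/eqP; rewrite eqEcard sub /=.
  rewrite -(leq_pmul2l (isT : (0 < 2)%N)); apply: leq_trans cI.
  rewrite ltnS in cK0.
  apply: leq_trans (leq_mul (leqnn 2) cK0) _.
  by rewrite -expnS prednK // addn_gt0 h1.
have : z \in K0 by rewrite inE Hz.
by rewrite -E => /imsetP [y _ ->]; exists y.
Qed.
End Fin2.


Lemma arith n f : ((n.+2 * n.+2).-1 <= f + n * n.+3 -> n.+3 <= f)%N.
Proof. move=> /leP H; apply/leP. rewrite -?multE -?plusE -?minusE in H *. simpl in *. nia. Qed.

Section Fin3.
Variable F : finFieldType.
Variable h : nat.
Hypothesis hF : #|F| = ((2 ^ h) ^ 2)%N.
Hypothesis h1 : (0 < h)%N.

Lemma roots_card (p : {poly F}) (S : {set F}) : p != 0 ->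
  (forall x, x \in S -> root p x) -> (#|S| < size p)%N.
Proof.
move=> Hp HS; rewrite cardE; apply: max_poly_roots => //; last exact: enum_uniq.
by apply/allP => x; rewrite mem_enum; exact: HS.
Qed.

Lemma q_ge2 : (2 <= 2 ^ h)%N.
Proof. by rewrite -{1}(expn1 2) leq_pexp2l. Qed.

Lemma frob_q (x : F) : x ^+ (2 ^ h) ^+ (2 ^ h) = x.
Proof. by rewrite -exprM -expnD (expcard hF). Qed.

Lemma norm_fiber (r : F) : r != 0 -> r ^+ (2 ^ h) = r ->
  ((2 ^ h).+1 <= #|[set v : F | v ^+ (2 ^ h).+1 == r]|)%N.
Proof.
move=> Hr0 Hrq.
set q := (2 ^ h)%N.
set A := [set~ (0:F)].
set R := [set r : F | (r != 0) && (r ^+ q == r)].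
have Nin : forall x, x \in A -> x ^+ q.+1 \in R.
  move=> x; rewrite in_setC1 => Hx; rewrite inE expf_neq0 //=.
  by rewrite -exprM mulSn exprD exprM frob_q -exprSr.
have cA : #|A| = (q * q).-1 by rewrite cardsC1 hF mulnn.
have Hpart := card_part (f := fun x => x ^+ q.+1) Nin.
have fib_le : forall b, b \in R -> (#|[set x in A | x ^+ q.+1 == b]| <= q.+1)%N.
  move=> b _; rewrite -ltnS.
  have Hsz : size ('X^(q.+1) - b%:P : {poly F}) = q.+2 by rewrite size_XnsubC.
  rewrite -Hsz; apply: roots_card; first by rewrite -size_poly_eq0 Hsz.
  move=> x; rewrite !inE => /andP [_ /eqP Hx].
  by rewrite /root !hornerE ?hornerXn Hx subrr.
have cR : (#|R| < q)%N.
  have q1 : (0 < q.-1)%N by rewrite -ltnS prednK ?q_ge2 // (leq_trans _ q_ge2).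
  have Hsz : size ('X^(q.-1) - 1%:P : {poly F}) = q by rewrite size_XnsubC // prednK // (leq_trans _ q_ge2).
  rewrite -Hsz; apply: roots_card; first by rewrite -size_poly_eq0 Hsz -lt0n (leq_trans _ q_ge2).
  move=> x; rewrite !inE => /andP [Hx /eqP Hxq].
  rewrite /root !hornerE ?hornerXn subr_eq0; apply/eqP; apply: (mulIf Hx).
  by rewrite mul1r -exprSr prednK ?Hxq // (leq_trans _ q_ge2).
have r0R : r \in R by rewrite inE Hr0 Hrq eqxx.
set f0 := #|[set x in A | x ^+ q.+1 == r]|.
have Hle : ((q * q).-1 <= f0 + (#|R|.-1) * q.+1)%N.
  rewrite -cA Hpart (big_setD1 r r0R) /= leq_add2l.
  have -> : #|R|.-1 = #|R :\ r| by rewrite (cardsD1 r R) r0R.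
  rewrite -sum_nat_const; apply: leq_sum => b; rewrite !inE => /andP [_ Hb].
  by apply: fib_le; rewrite inE.
have Hf0 : (q.+1 <= f0)%N.
  have q2 := q_ge2; rewrite -/q in q2.
  have [n Hn] : exists n, q = n.+2 by exists (q - 2)%N; rewrite -addn2 subnK.
  rewrite Hn in Hle cR *.
  apply: arith; apply: (leq_trans Hle); rewrite leq_add2l leq_mul2r; apply/orP; right.
  by rewrite -subn1 leq_subLR add1n -ltnS.
apply: (leq_trans Hf0); apply: subset_leq_card; apply/subsetP => x; rewrite !inE.
by case/andP.
Qed.

Lemma L7 (eps r c : F) : eps != 0 -> r != 0 -> r ^+ (2 ^ h) = r ->
  (forall v, v ^+ (2 ^ h).+1 = r -> Tr h (eps * v) = c) -> False.
Proof.
move=> He Hr0 Hrq Hv.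
set q := (2 ^ h)%N.
set p := (2 ^ h.-1)%N.
have Hqp : q = (p + p)%N by rewrite /q /p -{1}(prednK h1) expnS mul2n -addnn.
have Hjp : forall j : 'I_h, (2 ^ j <= p)%N.
  by move=> j; rewrite /p leq_pexp2l // -ltnS prednK.
set P : {poly F} := \sum_(j < h) (eps ^+ (2 ^ j) *: 'X^(p + 2 ^ j)
          + ((eps ^+ q * r) ^+ (2 ^ j)) *: 'X^(p - 2 ^ j)) - c *: 'X^p.
have Hev : forall v, v ^+ q.+1 = r -> P.[v] = 0.
  move=> v Hvr.
  have HT := Hv v Hvr.
  have E1 : v ^+ p * Tr h (eps * v) = \sum_(j < h) (eps ^+ (2 ^ j) * v ^+ (p + 2 ^ j)
          + (eps ^+ q * r) ^+ (2 ^ j) * v ^+ (p - 2 ^ j)).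
    rewrite /Tr big_split_ord /= mulrDr !mulr_sumr big_split /=.
    congr (_ + _); apply: eq_bigr => j _.
      by rewrite exprMn exprD mulrCA.
    rewrite expnD exprM exprMn.
    rewrite [RHS]mulrC -{1}(subnK (Hjp j)) exprD -mulrA; congr (_ * _).
    by rewrite -[v ^+ (2 ^ j) * _]exprMn mulrCA -exprS Hvr.
  rewrite /P !hornerE horner_sum.
  have E2 : \sum_(j < h) (eps ^+ (2 ^ j) *: 'X^(p + 2 ^ j)
          + ((eps ^+ q * r) ^+ (2 ^ j)) *: 'X^(p - 2 ^ j)).[v] =
          \sum_(j < h) (eps ^+ (2 ^ j) * v ^+ (p + 2 ^ j)
          + (eps ^+ q * r) ^+ (2 ^ j) * v ^+ (p - 2 ^ j)).
    by apply: eq_bigr => j _; rewrite !hornerE ?hornerXn.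
  rewrite E2 -E1 HT ?hornerXn mulrC subrr //.
have Hsz : (size P <= q.+1)%N.
  rewrite /P; apply: (leq_trans (size_polyD _ _)); rewrite geq_max size_polyN.
  apply/andP; split; last first.
    by apply: (leq_trans (size_scale_leq _ _)); rewrite size_polyXn ltnS Hqp leq_addr.
  apply: (big_ind (fun p : {poly F} => size p <= q.+1)%N) => [|p1 p2 H1 H2|j _].
  - by rewrite size_poly0.
  - by apply: leq_trans (size_polyD _ _) _; rewrite geq_max H1 H2.
  - apply: leq_trans (size_polyD _ _) _; rewrite geq_max.
    apply/andP; split; apply: (leq_trans (size_scale_leq _ _)); rewrite size_polyXn ltnS Hqp.
      by rewrite leq_add2l Hjp.
    by apply: leq_trans (leq_subr _ _) (leq_addr _ _).
have HP0 : P = 0.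
  apply/eqP; apply: contraT => HP.
  have Hf := norm_fiber Hr0 Hrq.
  have := roots_card HP (S := [set v : F | v ^+ q.+1 == r]).
  move=> /(_ _) H; suff : (#|[set v : F | v ^+ q.+1 == r]| < q.+1)%N by rewrite ltnNge Hf.
  apply: leq_trans Hsz; apply: H => x; rewrite inE => /eqP Hx; exact/eqP/Hev.
have := congr1 (fun P1 : {poly F} => P1`_(p.+1)) HP0.
rewrite /= coef0 /P coefB coef_sum coefZ coefXn (gtn_eqF (ltnSn p)) mulr0 subr0.
rewrite (bigD1 (Ordinal h1)) //= coefD !coefZ !coefXn expn0 addn1 eqxx mulr1.
rewrite (gtn_eqF (leq_ltn_trans (leq_subr _ _) (ltnSn p))) mulr0 addr0 expr1.
rewrite big1 ?addr0; first by move/eqP; rewrite (negbTE He).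
move=> i Hi; rewrite coefD !coefZ !coefXn.
rewrite (gtn_eqF (leq_ltn_trans (leq_subr _ _) (ltnSn p))) mulr0 addr0.
rewrite -[p.+1]addn1 eqn_add2l.
have: (1 != 2 ^ i)%N.
  apply/eqP=> E1; move: Hi; rewrite -val_eqE /=.
  case: (nat_of_ord i) E1 => // n; rewrite expnS => E1.
  by have := congr1 odd E1; rewrite oddM.
by move/negbTE=> ->; rewrite mulr0.
Qed.
End Fin3.


Lemma frobB (F : finFieldType) h (hF : #|F| = ((2 ^ h) ^ 2)%N) (x y : F) :
  (x - y) ^+ (2 ^ h) = x ^+ (2 ^ h) - y ^+ (2 ^ h).
Proof. by rewrite (oppc2 hF y) (frobD hF) (oppc2 hF). Qed.

Lemma sqE (F : finFieldType) h (hF : #|F| = ((2 ^ h) ^ 2)%N) (h1 : (0 < h)%N) (z : F) :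
  (z ^+ (2 ^ (h + h).-1)) ^+ 2 = z.
Proof. by rewrite -exprM -expnSr prednK ?(expcard hF) // addn_gt0 h1. Qed.

Lemma normq (F : finFieldType) h (hF : #|F| = ((2 ^ h) ^ 2)%N) (x : F) :
  (x ^+ (2 ^ h).+1) ^+ (2 ^ h) = x ^+ (2 ^ h).+1.
Proof. by rewrite -exprM mulSn exprD exprM (frob_q hF) -exprSr. Qed.

Theorem mainTheorem5 (h : nat) (F : finFieldType) (U : {set F}) :
  (1 < h)%N ->
  #|F| = ((2 ^ h) ^ 2)%N ->
  U != set0 ->
  (forall u, u \in U -> u != 0 /\ u ^+ (2 ^ h) = u) ->
  forall a0 a1 a2 b0 b1 b2 : F,
    nondeg_conic a0 a1 a2 b0 b1 b2 ->
    conicQ a0 a1 a2 b0 b1 b2 0 1 0 = 0 \/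
    exists x y : F, x ^+ (2 ^ h + 1) \in U /\ conicQ a0 a1 a2 b0 b1 b2 x y 1 = 0.
Proof.
move=> h1' hF HU HUq a0 a1 a2 b0 b1 b2 Hnd.
have h1 : (0 < h)%N by apply: ltn_trans h1'.
have [Ha1|Ha1] := eqVneq a1 0; first by left; rewrite Q010 Ha1.
right.
case/set0Pn: HU => u Hu; have [Hu0 Huq] := HUq u Hu.
case: (classic (exists x y : F, x ^+ (2 ^ h + 1) \in U /\ conicQ a0 a1 a2 b0 b1 b2 x y 1 = 0)) => // Hno.
exfalso.
set q := (2 ^ h)%N in Huq Hno *.
have Hsol : forall x y, x ^+ q.+1 = u ->
    (a0*x^+2 + b1*x + a2) + a1*y^+2 + (b0 + b2*x)*y = 0 -> False.
  move=> x y Hx Hy; apply: Hno; exists x, y; rewrite addn1 Hx Qaff; split => //.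
have Hf := norm_fiber hF h1 Hu0 Huq.
have [x1 Hx1] : exists x1 : F, x1 ^+ q.+1 = u.
  have : (0 < #|[set v : F | v ^+ q.+1 == u]|)%N by apply: leq_trans Hf.
  by rewrite card_gt0 => /set0Pn [x1]; rewrite inE => /eqP; exists x1.
have Htan : forall x, x ^+ q.+1 = u -> b0 + b2 * x != 0.
  move=> x Hx; apply/negP => /eqP HC.
  apply: (Hsol x ((a1^-1 * (a0*x^+2 + b1*x + a2)) ^+ (2 ^ (h + h).-1)) Hx).
  by rewrite HC mul0r addr0 (sqE hF h1) mulVKf // (addxx hF).
have Htr : forall x, x ^+ q.+1 = u ->
    Tr h (a1 * (a0*x^+2 + b1*x + a2) / (b0 + b2*x) ^+ 2) = 1.
  move=> x Hx; have [H0|//] := Tr01 hF (a1 * (a0*x^+2 + b1*x + a2) / (b0 + b2*x) ^+ 2).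
  have [z Hz] := AS_solvable hF h1 H0.
  have := root_sol Ha1 (Htan x Hx) Hz.
  move=> E; exfalso; apply: (Hsol x (z * (b0 + b2*x) / a1) Hx); by rewrite -addrA E (addxx hF).
have Hnuc : conicQ a0 a1 a2 b0 b1 b2 b0 b1 b2 = 0 -> (b0 != 0) || (b2 != 0) -> False.
  move=> HQ0 Hb.
  have Hne : (b0, b1, b2) != (0, 0, 0).
    apply/negP => /eqP [E0 E1 E2]; move: Hb; rewrite E0 E2 eqxx //.
  have [u' [v' [w' H]]] := Hnd b0 b1 b2 Hne HQ0.
  by move: H; rewrite polar_nucleus (two0 hF) mul0r eqxx.
set sq := fun w : F => w ^+ (2 ^ (h + h).-1).
have sqK : forall w, sq w ^+ 2 = w by move=> w; rewrite /sq (sqE hF h1).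
have Trsq' : forall w s : F, Tr h (w * s ^+ 2) = Tr h (sq w * s).
  by move=> w s; rewrite -[in RHS](Trsq hF) exprMn sqK.
have eps0 : forall (e k b : F), sq e + k * b = 0 -> e = (k * b) ^+ 2.
  move=> e k b /eqP; rewrite addr_eq0 => /eqP E.
  by rewrite -(sqK e) E sqrrN.
have [Hb2|Hb2] := eqVneq b2 0.
  subst b2.
  have Hb0 : b0 != 0 by have := Htan x1 Hx1; rewrite mul0r addr0.
  set k := a1 / b0 ^+ 2.
  set eps := sq (k * a0) + k * b1.
  have Hc : forall v, v ^+ (2 ^ h).+1 = u -> Tr h (eps * v) = 1 - Tr h (k * a2).
    move=> v Hv; have := Htr v Hv; rewrite e_b20 // -/k.
    rewrite !(TrD hF) Trsq' -(TrD hF) -mulrDl => <-.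
    by rewrite addrK.
  have [He|He] := eqVneq eps 0; last by apply: (L7 hF h1 He Hu0 Huq Hc).
  have := eps0 _ _ _ He => E.
  have E2 := eps_zero Ha1 Hb0 E.
  apply: (Hnuc _); last by rewrite Hb0.
  by rewrite QN_b20 mulrC E2 (addxx hF).
set x0 := - b0 / b2.
have Cx0 : b0 + b2 * x0 = 0 by rewrite /x0 mulrC divfK // addrN.
set N0 := x0 ^+ q.+1.
have HN0 : N0 != u by apply/eqP => E; have := Htan x0 E; rewrite Cx0 eqxx.
set m := N0 - u.
have Hm0 : m != 0 by rewrite subr_eq0.
have Hmq : m ^+ q = m by rewrite /m (frobB hF) (normq hF) Huq.
set Xq := x0 ^+ q.
have HmX : m = x0 * Xq - u by rewrite /m /N0 exprSr mulrC.
set r' := u / m ^+ 2.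
have Hr0 : r' != 0 by rewrite mulf_neq0 ?invr_eq0 ?expf_neq0.
have Hrq : r' ^+ (2 ^ h) = r'.
  by rewrite /r' expr_div_n Huq -exprM mulnC exprM Hmq.
set k := a1 / b2 ^+ 2.
set D0 := a0 * x0 ^+ 2 + b1 * x0 + a2.
set eps := sq (k * D0) + k * b1.
have Hc : forall v, v ^+ (2 ^ h).+1 = r' ->
    Tr h (eps * v) = 1 - Tr h (k * a0) - Tr h (- (eps * (Xq / m))).
  move=> v Hv.
  have Hv0 : v != 0 by apply/negP => /eqP E; move: Hr0; rewrite -Hv E expr0n eqxx.
  set s := v - Xq / m.
  have Hs0 : s != 0.
    apply/negP; rewrite subr_eq0 => /eqP E.
    move: Hv; rewrite E expr_div_n exprSr (frob_q hF) exprSr Hmq -expr2 /r' => E2.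
    have : x0 * Xq = u.
      by apply: (mulIf (invr_neq0 (expf_neq0 2 Hm0))); rewrite E2.
    by move=> E3; move: HN0; rewrite /N0 exprS -/Xq E3 eqxx.
  have Hsq : s ^+ q = r' / v - x0 / m.
    rewrite /s (frobB hF) expr_div_n (frob_q hF) Hmq; congr (_ - _).
    by apply: (mulIf Hv0); rewrite -exprSr Hv mulfVK.
  have HS0 : r' / v - x0 / m != 0 by rewrite -Hsq expf_neq0.
  have Hx : (x0 + s^-1) ^+ q.+1 = u.
    rewrite exprSr (frobD hF) exprVn Hsq.
    exact: norm_id HmX Hm0 Hv0 Hs0 HS0.
  have := Htr _ Hx; rewrite C_inv // e_b2 // -/x0 -/k -/D0 (two0 hF) mul0r addr0.
  rewrite (mulrDr k (D0 * s ^+ 2 + b1 * s) a0) (mulrDr k (D0 * s ^+ 2) (b1 * s)) !(TrD hF) mulrA Trsq' mulrA -(TrD hF) -mulrDl -/eps.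
  rewrite /s mulrBr (TrD hF) => <-.
  by rewrite !addrK.
have [He|He] := eqVneq eps 0; last by apply: (L7 hF h1 He Hr0 Hrq Hc).
have E := eps0 _ _ _ He.
have E2 := eps_zero Ha1 Hb2 E.
apply: (Hnuc _); last by rewrite Hb2 orbT.
by rewrite QN_b2 // -/x0 -/D0 E2 (addxx hF) add0r (two0 hF) !mul0r.
Qed.
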